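(* Let $\mathcal{M}=(S,s_I,\mathit{Act},V,\mathcal{P})$ be an affine parametric Markov decision process, let $T\subseteq S$ and $\lambda\in[0,1]$, and let $\varphi$ be the reachability specification ''$T$ is reached with probability at most $\lambda$''. Assume that for every $s,s'\in S$ and $\alpha\in A(s)$, $\mathcal{P}(s,\alpha,s')=2d_{s,\alpha,s'}\,y_{s,\alpha,s'}+c_{s,\alpha,s'}$ with $y_{s,\alpha,s'}\in V$ and constants $c_{s,\alpha,s'},d_{s,\alpha,s'}\in\mathbb{R}$. Fix constants $\varepsilon_{\mathrm{graph}}>0$ and $\tau>0$, and arbitrary reference values $\hat v\in\mathbb{R}$ ($v\in V$) and $\hat p_s\in\mathbb{R}$ ($s\in S$). For each triple $(s,\alpha,s')$ write $d=d_{s,\alpha,s'}$, $c=c_{s,\alpha,s'}$, $y=y_{s,\alpha,s'}$, $z=p_{s'}$, $\hat y=\widehat{y_{s,\alpha,s'}}$, $\hat z=\hat p_{s'}$, $\sigma=1$ if $d\ge0$ and $\sigma=-1$ otherwise, and set $h_{\mathrm{cvx}}(s,\alpha,s')=|d|(y+\sigma z)^2+c\,z$ and $h_{\mathrm{aff}}(s,\alpha,s')=-|d|(\hat y^2+\hat z^2)-2|d|\big(\hat y(y-\hat y)+\hat z(z-\hat z)\big)$. Consider the convex penalty problem in the real variables $v\in V$, $p_s\in[0,1]$ ($s\in S$) and $k_s$ ($s\in S\setminus T$): minimize $p_{s_I}+\tau\sum_{s\in S\setminus T}k_s$ subject to $p_s=1$ for all $s\in T$; $\mathcal{P}(s,\alpha,s')\ge\varepsilon_{\mathrm{graph}}$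 for all $s,s'\in S$ and $\alpha\in A(s)$ such that $\mathcal{P}(s,\alpha,s')$ is not the zero polynomial; $\sum_{s'\in S}\mathcal{P}(s,\alpha,s')=1$ for all $s\in S$ and $\alpha\in A(s)$; $\lambda\ge p_{s_I}$; $k_s+p_s\ge\sum_{s'\in S}\big(h_{\mathrm{cvx}}(s,\alpha,s')+h_{\mathrm{aff}}(s,\alpha,s')\big)$ for all $s\in S\setminus T$ and $\alpha\in A(s)$; $k_s\ge 0$ for all $s\in S\setminus T$. If $(\mathbf{v},\mathbf{p},\mathbf{k})$ is a feasible solution of this problem with $\tau\sum_{s\in S\setminus T}k_s=0$, then the parameter instantiation $\mathbf{v}$ is well-defined for $\mathcal{M}$ and $\mathcal{M}[\mathbf{v}]\models\varphi$.
   Context: A pMDP is a tuple $(S,s_I,\mathit{Act},V,\mathcal{P})$ with finite state set $S$, initial state $s_I$, finite action set $\mathit{Act}$, finite set $V$ of real-valued parameters, and transition function $\mathcal{P}:S\times\mathit{Act}\times S\to\mathbb{Q}[V]$ (polynomials over $V$); it is affine if every $\mathcal{P}(s,\alpha,s')$ is affine in the parameters. $A(s)=\{\alpha\mid\exists s'.\ \mathcal{P}(s,\alpha,s')\ne0\}$ is the nonempty set of enabled actions at $s$. An instantiation $\mathbf{v}:V\to\mathbb{R}$ yields $\mathcal{M}[\mathbf{v}]$ by evaluating each polynomial at $\mathbf{v}$; it is well-defined if $\mathcal{M}[\mathbf{v}]$ is a Markov decision process, i.e. all $\mathcal{P}(s,\alpha,s')[\mathbf{v}]\in[0,1]$ and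 $\sum_{s'}\mathcal{P}(s,\alpha,s')[\mathbf{v}]=1$ for all $s$ and $\alpha\in A(s)$. A (memoryless deterministic) strategy is a map $\sigma:S\to\mathit{Act}$ with $\sigma(s)\in A(s)$; it induces a Markov chain. $\mathcal{M}[\mathbf{v}]\models\varphi$ means that for every strategy $\sigma$, the probability of eventually reaching $T$ from $s_I$ in the Markov chain induced by $\sigma$ on $\mathcal{M}[\mathbf{v}]$ is at most $\lambda$. *)

(* Defs.v *)
From mathcomp Require Import all_boot all_order all_algebra.
From mathcomp Require Import all_classical all_reals all_analysis.
Set Implicit Arguments. Unset Strict Implicit. Unset Printing Implicit Defensive.
Import Order.TTheory GRing.Theory Num.Theory.
Import numFieldNormedType.Exports.
Local Open Scope ring_scope.

Section PMDP.
Variables (R : realType) (S Act V : finType).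
(* The affine pMDP: P(s,a,s') = 2 * d s a s' * y s a s' + c s a s', with y s a s' in V. *)
Variables (d c : S -> Act -> S -> R) (y : S -> Act -> S -> V).

Definition nonzero_trans (s : S) (a : Act) (s' : S) : bool :=
  (d s a s' != 0) || (c s a s' != 0).

Definition enabled (s : S) (a : Act) : bool := [exists s', nonzero_trans s a s'].

Definition Pinst (v : V -> R) (s : S) (a : Act) (s' : S) : R :=
  2 * d s a s' * v (y s a s') + c s a s'.

Definition well_defined (v : V -> R) : Prop :=
  forall s a, enabled s a ->
    (forall s', 0 <= Pinst v s a s' <= 1) /\ \sum_(s' : S) Pinst v s a s' = 1.

Definition strategy (sg : S -> Act) : Prop := forall s, enabled s (sg s).

Fixpoint reach_bounded (v : V -> R) (sg : S -> Act) (T : {set S}) (n : nat) (s : S) : R :=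
  if s \in T then 1 else
  match n with
  | 0 => 0
  | n'.+1 => \sum_(s' : S) Pinst v s (sg s) s' * reach_bounded v sg T n' s'
  end.

Definition reach_prob (v : V -> R) (sg : S -> Act) (T : {set S}) (s : S) : R :=
  limn (fun n : nat => reach_bounded v sg T n s : R^o).

Definition satisfies (v : V -> R) (sI : S) (T : {set S}) (lam : R) : Prop :=
  forall sg, strategy sg -> reach_prob v sg T sI <= lam.

Definition sgnd (x : R) : R := if 0 <= x then 1 else -1.

Definition h_cvx (v : V -> R) (p : S -> R) (s : S) (a : Act) (s' : S) : R :=
  `|d s a s'| * (v (y s a s') + sgnd (d s a s') * p s') ^+ 2 + c s a s' * p s'.

Definition h_aff (vh : V -> R) (ph : S -> R) (v : V -> R) (p : S -> R)
    (s : S) (a : Act) (s' : S) : R :=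
  let yh := vh (y s a s') in let zh := ph s' in
  - `|d s a s'| * (yh ^+ 2 + zh ^+ 2)
  - 2 * `|d s a s'| * (yh * (v (y s a s') - yh) + zh * (p s' - zh)).

Definition feasible (sI : S) (T : {set S}) (lam eps : R) (vh : V -> R) (ph : S -> R)
    (v : V -> R) (p : S -> R) (k : S -> R) : Prop :=
  (forall s, 0 <= p s <= 1) /\
  (forall s, s \in T -> p s = 1) /\
  (forall s a s', enabled s a -> nonzero_trans s a s' -> eps <= Pinst v s a s') /\
  (forall s a, enabled s a -> \sum_(s' : S) Pinst v s a s' = 1) /\
  p sI <= lam /\
  (forall s a, s \notin T -> enabled s a ->
     \sum_(s' : S) (h_cvx v p s a s' + h_aff vh ph v p s a s') <= k s + p s) /\
  (forall s, s \notin T -> 0 <= k s).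

End PMDP.

(* Main.v *)
Require Import Defs.
From mathcomp Require Import all_boot all_order all_algebra.
From mathcomp Require Import all_classical all_reals all_analysis.
From mathcomp Require Import ring lra.
Import Order.TTheory GRing.Theory Num.Theory.
Local Open Scope ring_scope.

Theorem theorem1 (R : realType) (S Act V : finType)
  (d c : S -> Act -> S -> R) (y : S -> Act -> S -> V)
  (sI : S) (T : {set S}) (lam eps tau : R)
  (vh : V -> R) (ph : S -> R) (v : V -> R) (p : S -> R) (k : S -> R) :
  (forall s, exists a, enabled d c s a) ->
  0 <= lam <= 1 -> 0 < eps -> 0 < tau ->
  feasible d c y sI T lam eps vh ph v p k ->
  tau * (\sum_(s in ~: T) k s) = 0 ->
  well_defined d c y v /\ satisfies d c y v sI T lam.
Proof.
move=> _ _ eps0 tau0 [p01 [pT [Peps [Psum [plam [hk k0]]]]]] tk.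
have Pge0 : forall s a s', enabled d c s a -> 0 <= Pinst d c y v s a s'.
  move=> s a s' en; case nz: (nonzero_trans d c s a s').
    by apply: le_trans (Peps _ _ _ en nz); apply: ltW.
  move: nz; rewrite /nonzero_trans => /negbT; rewrite negb_or !negbK.
  by rewrite /Pinst => /andP[/eqP -> /eqP ->]; rewrite mulr0 mul0r addr0.
have WD : well_defined d c y v.
  move=> s a en; split; last exact: Psum.
  move=> s'; rewrite Pge0 //=; rewrite -(Psum s a en).
  rewrite (bigD1 s') //= lerDl; apply: sumr_ge0 => i _; exact: Pge0.
split => //.
have sum0 : \sum_(s in ~: T) k s = 0.
  by move: tk => /eqP; rewrite mulf_eq0 gt_eqF //= => /eqP.
have kz : forall s, s \notin T -> k s = 0.
  move=> s sT; apply: (psumr_eq0P _ sum0); first by move=> i; rewrite inE; apply: k0.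
  by rewrite inE.
have key : forall s a, s \notin T -> enabled d c s a ->
    \sum_(s' : S) Pinst d c y v s a s' * p s' <= p s.
  move=> s a sT en; have := hk s a sT en; rewrite kz // add0r; apply: le_trans.
  apply: ler_sum => s' _.
  rewrite /h_cvx /h_aff /Pinst /sgnd.
  set D := d s a s'; set Y := v (y s a s'); set Z := p s'; set C := c s a s'.
  set Yh := vh (y s a s'); set Zh := ph s'.
  have -> : `|D| * (Y + (if 0 <= D then 1 else -1) * Z) ^+ 2 + C * Z +
     (- `|D| * (Yh ^+ 2 + Zh ^+ 2) - 2 * `|D| * (Yh * (Y - Yh) + Zh * (Z - Zh)))
     = (2 * D * Y + C) * Z + `|D| * ((Y - Yh) ^+ 2 + (Z - Zh) ^+ 2).
    case: (leP 0 D) => hD.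
      by rewrite ger0_norm //=; ring.
    by rewrite ltr0_norm //=; ring.
  by rewrite lerDl; apply: mulr_ge0 => //; apply: addr_ge0; apply: sqr_ge0.
move=> sg sgS.
have ub : forall n s, reach_bounded d c y v sg T n s <= p s.
  elim=> [|n IH] s /=; (case: ifP => sT; first by rewrite pT).
    by case/andP: (p01 s).
  apply: le_trans (key s (sg s) (negbT sT) (sgS s)).
  apply: ler_sum => s' _; apply: ler_wpM2l; [exact: Pge0 | exact: IH].
have mono : forall n s, reach_bounded d c y v sg T n s <= reach_bounded d c y v sg T n.+1 s.
  elim=> [|n IH] s /=; case: ifP => sT //.
    apply: sumr_ge0 => s' _; apply: mulr_ge0; first exact: Pge0.
    by case: (s' \in T) => //=; case: (s' \in T).
  apply: ler_sum => s' _; apply: ler_wpM2l; [exact: Pge0 | exact: IH].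
rewrite /reach_prob.
set u := (fun n : nat => _).
have nd : nondecreasing_seq u by apply/nondecreasing_seqP => n; exact: mono.
have bd : has_ubound (range u) by exists 1 => _ [n _ <-]; apply: le_trans (ub n sI) _; case/andP: (p01 sI).
have cv := nondecreasing_cvgn nd bd.
apply: le_trans plam; apply: limr_le; first exact: (cvgP (sup (range u) : R^o) cv).
by near=> n; exact: ub.
Unshelve. all: by end_near.
Qed.
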